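(* Let $G$ be a graph with no induced subgraph isomorphic to $C_4$. Then a clique of $G$ is strong if and only if it is simplicial.
   Context: A clique is strong if it intersects every maximal independent set. A clique $C$ of $G$ is simplicial if there is a vertex $v\in V(G)$ with $C=N[v]$, the closed neighborhood of $v$. *)

(* Defs.v *)
From mathcomp Require Import all_boot.
Set Implicit Arguments. Unset Strict Implicit. Unset Printing Implicit Defensive.

Section Graphs.
Variable T : finType.
Variable e : rel T.

Definition simple_graph : Prop := irreflexive e /\ symmetric e.

Definition is_clique (C : {set T}) : bool :=
  [forall x in C, forall y in C, (x != y) ==> e x y].

Definition is_independent (S : {set T}) : bool :=
  [forall x in S, forall y in S, ~~ e x y].

Definition is_max_independent (S : {set T}) : bool :=
  maxset is_independent S.

Definition strong_clique (C : {set T}) : Prop :=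
  is_clique C /\ forall I : {set T}, is_max_independent I -> exists2 x, x \in C & x \in I.

Definition closed_nbhd (v : T) : {set T} := [set u | (u == v) || e v u].

Definition simplicial_clique (C : {set T}) : Prop :=
  is_clique C /\ exists v : T, C = closed_nbhd v.

Definition C4_free : Prop :=
  forall a b c d : T, e a b -> e b c -> e c d -> e d a ->
    a != c -> b != d -> e a c || e b d.
End Graphs.

(* Main.v *)
Require Import Defs.
From mathcomp Require Import all_boot.

Section Proof9.
Variable T : finType.
Variable e : rel T.
Hypothesis Hirr : irreflexive e.
Hypothesis Hsym : symmetric e.

Lemma cliqueP (C : {set T}) x y : is_clique e C -> x \in C -> y \in C -> x != y -> e x y.
Proof. by move=> /forallP H xC yC; move: (H x); rewrite xC /= => /forallP /(_ y); rewrite yC /= => /implyP; apply. Qed.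

Lemma indepP (S : {set T}) x y : is_independent e S -> x \in S -> y \in S -> ~~ e x y.
Proof. by move=> /forallP H xC yC; move: (H x); rewrite xC /= => /forallP /(_ y); rewrite yC. Qed.

Lemma indepI (S : {set T}) : (forall x y, x \in S -> y \in S -> ~~ e x y) -> is_independent e S.
Proof. move=> H; apply/forallP=> x; apply/implyP=> xS; apply/forallP=> y; apply/implyP=> yS; exact: H. Qed.

Lemma simp_strong (C : {set T}) v : C = closed_nbhd e v ->
  forall I, is_max_independent e I -> exists2 x, x \in C & x \in I.
Proof.
move=> -> I /maxsetP [indI maxI].
have [/existsP [u /andP [uI evu]]|nodom] := boolP [exists u, (u \in I) && e v u].
  by exists u => //; rewrite inE evu orbT.
exists v; first by rewrite inE eqxx.
have indJ : is_independent e (v |: I).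
  apply: indepI => x y; rewrite !inE => /orP [/eqP->|xI] /orP [/eqP->|yI].
  - by rewrite Hirr.
  - by apply/negP => evy; move/existsP: nodom; apply; exists y; rewrite yI.
  - by rewrite Hsym; apply/negP => evy; move/existsP: nodom; apply; exists x; rewrite xI.
  - exact: indepP I x y indI xI yI.
by rewrite -(maxI _ indJ (subsetUr _ _)) setU11.
Qed.

Hypothesis HC4 : C4_free e.

Lemma strong_simp (C : {set T}) : is_clique e C ->
  (forall I, is_max_independent e I -> exists2 x, x \in C & x \in I) ->
  exists v, C = closed_nbhd e v.
Proof.
move=> cl str.
have [/existsP [v /eqP ->]|noV] := boolP [exists v, C == closed_nbhd e v]; first by exists v.
exfalso.
have out : forall c, c \in C -> exists2 u, u \notin C & e c u.
  move=> c cC.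
  have sub : C \subset closed_nbhd e c.
    apply/subsetP => x xC; rewrite inE; case: eqP => //= /eqP ne.
    by apply: (cliqueP C c x cl cC xC); rewrite eq_sym.
  have : ~~ (closed_nbhd e c \subset C).
    apply/negP => sub2; move/existsP: noV; apply; exists c.
    by rewrite eqEsubset sub sub2.
  case/subsetPn => u; rewrite inE => /orP [/eqP ->|ecu] uC; first by rewrite cC in uC.
  by exists u.
pose P (S : {set T}) := is_independent e S && (S \subset ~: C).
pose D (S : {set T}) := [set c in C | [exists s in S, e c s]].
have P0 : P set0.
  by rewrite /P sub0set andbT; apply: indepI => x y; rewrite inE.
case: (@arg_maxnP _ set0 P (fun S => #|D S|) P0) => S /andP [indS subS] maxS.
have dom : forall c, c \in C -> exists2 s, s \in S & e c s.
  move=> c cC; apply/exists_inP; case: (boolP [exists s in S, e c s]) => // /negP nd.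
  have [u uC ecu] := out c cC.
  pose S' := u |: [set s in S | ~~ e u s].
  have PS' : P S'.
    apply/andP; split.
      apply: indepI => x y; rewrite !inE => /orP [/eqP->|/andP [xS nux]] /orP [/eqP->|/andP [yS nuy]].
      - by rewrite Hirr.
      - by [].
      - by rewrite Hsym.
      - exact: indepP S x y indS xS yS.
    apply/subsetP => x; rewrite !inE => /orP [/eqP->|/andP [xS _]]; first by [].
    by move/subsetP: subS => /(_ x xS); rewrite inE.
  have prop : D S \proper D S'.
    apply/properP; split.
      apply/subsetP => c'; rewrite !inE => /andP [c'C /exists_inP [s sS ec's]].
      rewrite c'C /=; apply/exists_inP.
      have sC : s \notin C by move/subsetP: subS => /(_ s sS); rewrite inE.
      case eus: (e u s).
        exists u; first by rewrite !inE eqxx.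
        have cc' : c != c'.
          by apply/eqP => ecc; apply: nd; rewrite ecc; apply/exists_inP; exists s.
        have := HC4 u c c' s.
        rewrite Hsym ecu (cliqueP C c c' cl cC c'C cc') ec's Hsym eus => /(_ isT isT isT isT).
        have -> : u != c' by apply/eqP => E; rewrite E c'C in uC.
        have -> : c != s by apply/eqP => E; rewrite -E cC in sC.
        move=> /(_ isT isT) /orP [euc'|ecs]; first by rewrite Hsym.
        by exfalso; apply: nd; apply/exists_inP; exists s.
      by exists s => //; rewrite !inE sS eus orbT.
    exists c; last by rewrite inE cC /=; apply/negP.

    rewrite inE cC /=; apply/exists_inP; exists u => //; by rewrite !inE eqxx.
  by have := maxS S' PS'; rewrite /= leqNgt (proper_card prop).
have [I maxI SI] := maxset_exists indS.
have [x xC xI] := str I maxI.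
have [s sS exs] := dom x xC.
have := indepP I x s (maxsetp maxI) xI (subsetP SI s sS).
by rewrite exs.
Qed.

End Proof9.

Theorem mainTheorem9 (T : finType) (e : rel T) :
  simple_graph e -> C4_free e ->
  forall C : {set T}, is_clique e C ->
    (strong_clique e C <-> simplicial_clique e C).
Proof.
move=> [Hirr Hsym] HC4 C cl; split.
  by case=> _ str; split => //; apply: strong_simp.
case=> _ [v Cv]; split => //; exact: simp_strong Cv.
Qed.
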